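(* Suppose $G$ is a complete graph whose travel times satisfy the triangle inequality $t_{i,j}\le t_{i,k}+t_{k,j}$ for all distinct $i,j,k\in V$. Let $C_1,\dots,C_m$ be length-feasible cycles whose node sets cover $V$ (every node lies in at least one $C_r$). Then there exist $m'\le m$ length-feasible cycles whose node sets partition $V$; in particular the minimum number of length-feasible cycles needed to cover $V$ equals the minimum number needed to partition $V$.
   Context: $G=(V,E)$ is an undirected graph with critical times $q_i>0$ ($i\in V$) and travel times $t_{i,j}=t_{j,i}\ge 0$ ($\{i,j\}\in E$). A cycle is $C=(i_0,i_1,\dots,i_K)$ with $K\ge1$, $i_K=i_0$, $i_0,\dots,i_{K-1}$ distinct and $\{i_{k-1},i_k\}\in E$ for all $k$ when $K\ge2$; for $K=1$ it is the singleton cycle on node $i_0$, with travel time $0$. Its travel time is $t(C)=\sum_{k=1}^K t_{i_{k-1},i_k}$ (for $K\ge2$) and its minimum critical time is $q(C)=\min_{0\le k\le K}q_{i_k}$. $C$ is length-feasible if $t(C)\le q(C)$. *)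

(* Defs.v *)
From mathcomp Require Import all_boot all_order all_algebra.
Set Implicit Arguments. Unset Strict Implicit. Unset Printing Implicit Defensive.
Import Order.TTheory GRing.Theory Num.Theory.
Local Open Scope ring_scope.

(* The graph is complete on the finite node set V, so every pair of distinct
   nodes is an edge.  A cycle C = (i_0,...,i_{K-1},i_0) is represented by the
   sequence [:: i_0; ...; i_{K-1}] of its distinct nodes (K >= 1). *)
Definition is_cycle (V : finType) (s : seq V) : bool := (s != [::]) && uniq s.

Definition cycle_time (R : numDomainType) (V : finType) (t : V -> V -> R)
  (s : seq V) : R :=
  if (size s <= 1)%N then 0
  else \sum_(p <- zip s (rot 1 s)) t p.1 p.2.

Definition cycle_minq (R : realDomainType) (V : finType) (q : V -> R)
  (s : seq V) : R :=
  match s with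
  | [::] => 0
  | x :: s' => foldr Num.min (q x) (map q s')
  end.

Definition length_feasible (R : realDomainType) (V : finType)
  (t : V -> V -> R) (q : V -> R) (s : seq V) : bool :=
  is_cycle s && (cycle_time t s <= cycle_minq q s).

(* Main.v *)
Require Import Defs.
From mathcomp Require Import all_boot all_order all_algebra.
Import Order.TTheory GRing.Theory Num.Theory.
Local Open Scope ring_scope.
Set Implicit Arguments. Unset Strict Implicit.

Section Aux.
Variables (R : realFieldType) (V : finType) (q : V -> R) (t : V -> V -> R).

Fixpoint pth (a : V) (s : seq V) : R :=
  if s is y :: s' then t a y + pth y s' else 0.

Lemma pth_rcons a u b : pth a (rcons u b) = pth a u + t (last a u) b.
Proof.
elim: u a => [|y u IH] a /=; first by rewrite addr0 add0r.
by rewrite IH addrA.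
Qed.

Lemma sum_zip a u b :
  \sum_(p <- zip (a :: u) (rcons u b)) t p.1 p.2 = pth a (rcons u b).
Proof.
elim: u a => [|y u IH] a /=; first by rewrite big_cons big_nil.
by rewrite big_cons IH.
Qed.

Lemma ct_cons x u : u != [::] -> cycle_time t (x :: u) = pth x (rcons u x).
Proof.
case: u => [|y u] // _; rewrite /cycle_time /=.
by rewrite big_cons cats1 sum_zip.
Qed.

Lemma ct_rot1 s : cycle_time t (rot 1 s) = cycle_time t s.
Proof.
case: s => [|x [|y u]] //.
rewrite rot1_cons.
have -> : rcons (y :: u) x = y :: rcons u x by [].
rewrite !ct_cons //; last by rewrite -size_eq0 size_rcons.
by rewrite pth_rcons last_rcons /= addrC.
Qed.

Lemma ct_rot k s : cycle_time t (rot k s) = cycle_time t s.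
Proof.
case: (leqP (size s) k) => hk; first by rewrite rot_oversize.
elim: k hk => [|k IH] hk; first by rewrite rot0.
by rewrite rotS ?ct_rot1 ?IH // ltnW.
Qed.

Hypothesis ht_tri : forall i j k, i != j -> j != k -> i != k ->
     t i j <= t i k + t k j.

Lemma pth_filter (P : pred V) b s a :
  uniq (a :: s) -> b \notin s -> (a != b) || (filter P s != [::]) ->
  pth a (rcons (filter P s) b) <= pth a (rcons s b).
Proof.
elim: s a => [|y s IH] a //=.
rewrite !inE !negb_or => /and3P[/andP[ay ays] ys us] /andP[yb bs] hab.
case Py: (P y) => /=.
  rewrite lerD2l; apply: IH => //=; first by rewrite ys.
  by rewrite eq_sym yb.
move: hab; rewrite Py => hab.
apply: le_trans (IH a _ bs hab) _; first by rewrite /= ays.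
case: s ays ys us bs hab {IH} => [|z s] /= ays ys us bs hab.
  rewrite !addr0; apply: ht_tri => //.
  by rewrite orbF in hab.
move: ays ys; rewrite !inE !negb_or => /andP[az _] /andP[yz _].
rewrite addrA lerD2r; apply: ht_tri => //; by rewrite eq_sym.
Qed.

Lemma minq_le x s v : v \in x :: s -> cycle_minq q (x :: s) <= q v.
Proof.
rewrite /=; elim: s => [|y s IH]; first by rewrite inE => /eqP ->.
move=> hv; rewrite /= ge_min; move: hv; rewrite !inE => /or3P[hv|/eqP->|hv].
- by apply/orP; right; apply: IH; rewrite inE hv.
- by rewrite lexx.
- by apply/orP; right; apply: IH; rewrite inE hv orbT.
Qed.

Lemma minq_mem x s : exists2 w, w \in x :: s & cycle_minq q (x :: s) = q w.
Proof.
rewrite /=; elim: s => [|y s [w hw IH]]; first by exists x; rewrite ?inE.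
rewrite /= minEle; case: ifP => _.
  by exists y; rewrite // !inE eqxx orbT.
by exists w => //; move: hw; rewrite !inE => /orP[->|->]; rewrite ?orbT.
Qed.

Lemma minq_le' c v : v \in c -> cycle_minq q c <= q v.
Proof. by case: c => // x s; apply: minq_le. Qed.

End Aux.

Section Main.
Variables (R : realFieldType) (V : finType) (q : V -> R) (t : V -> V -> R).
Hypothesis hq : forall i, 0 < q i.
Hypothesis ht_tri : forall i j k, i != j -> j != k -> i != k ->
     t i j <= t i k + t k j.

Definition pick_cyc (P : pred V) (c : seq V) := filter P (rot (find P c) c).

Lemma mem_pick P c v : (v \in pick_cyc P c) = P v && (v \in c).
Proof. by rewrite mem_filter mem_rot. Qed.

Lemma pick_feas P c : length_feasible t q c -> pick_cyc P c != [::] ->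
  length_feasible t q (pick_cyc P c).
Proof.
case/andP=> /andP[cne uc] hc hd.
have [w hw] : exists w, w \in pick_cyc P c.
  by case: (pick_cyc P c) hd => [|w ?] //; exists w; rewrite inE eqxx.
move: (hw); rewrite mem_pick => /andP[Pw wc].
have hP : has P c by apply/hasP; exists w.
have kc : (find P c < size c)%N by rewrite -has_find.
have [y [s [hrot Py]]] : exists y s, rot (find P c) c = y :: s /\ P y.
  exists (nth w c (find P c)), (drop (find P c).+1 c ++ take (find P c) c).
  by rewrite /rot (drop_nth w kc) nth_find.
have us : uniq (y :: s) by rewrite -hrot rot_uniq.
have hd' : pick_cyc P c = y :: filter P s by rewrite /pick_cyc hrot /= Py.
apply/andP; split; first by rewrite /is_cycle hd /pick_cyc filter_uniq ?rot_uniq.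
have [m hm em] := minq_mem q y (filter P s).
have le1 : cycle_minq q c <= cycle_minq q (pick_cyc P c).
  rewrite hd' em; apply: minq_le'.
  by move: hm; rewrite -hd' mem_pick => /andP[].
rewrite hd'; case: (boolP (filter P s == [::])) => [/eqP->|hne].
  by rewrite /cycle_time /= ltW.
rewrite hd' in le1; apply: le_trans le1; apply: le_trans hc.
rewrite -(ct_rot t (find P c) c) hrot.
have sne : s != [::] by case: s hne {hrot us hd' hm em}.
rewrite ct_cons // ct_cons //; apply: (pth_filter ht_tri) => //.
  by case/andP: us.
by rewrite hne orbT.
Qed.
Fixpoint go (seen : seq V) (Cs : seq (seq V)) : seq (seq V) :=
  match Cs with
  | [::] => [::]
  | c :: Cs' =>
    let d := pick_cyc (fun v => v \notin seen) c in
    if d == [::] then go (seen ++ c) Cs' else d :: go (seen ++ c) Cs'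
  end.

Lemma go_size seen Cs : (size (go seen Cs) <= size Cs)%N.
Proof.
elim: Cs seen => [|c Cs IH] seen //=.
by case: ifP => _ /=; [apply: leq_trans (IH _) _|rewrite ltnS IH].
Qed.

Lemma go_feas seen Cs : all (length_feasible t q) Cs ->
  all (length_feasible t q) (go seen Cs).
Proof.
elim: Cs seen => [|c Cs IH] seen //= /andP[hc hCs].
case: ifP => hd /=; first exact: IH.
by rewrite IH // andbT pick_feas // hd.
Qed.

Lemma go_count seen Cs v :
  count (fun c => v \in c) (go seen Cs) =
  ((v \notin seen) && has (fun c => v \in c) Cs : nat).
Proof.
elim: Cs seen => [|c Cs IH] seen /=; first by rewrite andbF.
have e : count (fun c => v \in c)
   (if pick_cyc (fun v => v \notin seen) c == [::]
    then go (seen ++ c) Cs else pick_cyc (fun v => v \notin seen) c :: go (seen ++ c) Cs)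
  = (((v \notin seen) && (v \in c)) + count (fun c => v \in c) (go (seen ++ c) Cs))%N.
  case: ifP => [/eqP hd|_] /=; last by rewrite mem_pick.
  by rewrite -(mem_pick (fun v => v \notin seen)) hd.
rewrite e IH mem_cat negb_or.
by case: (v \in seen); case: (v \in c).
Qed.
End Main.

Theorem mainTheorem5 (R : realFieldType) (V : finType)
  (q : V -> R) (t : V -> V -> R)
  (hq : forall i, 0 < q i)
  (ht_sym : forall i j, i != j -> t i j = t j i)
  (ht_nonneg : forall i j, i != j -> 0 <= t i j)
  (ht_tri : forall i j k, i != j -> j != k -> i != k ->
     t i j <= t i k + t k j)
  (Cs : seq (seq V))
  (hCs : all (length_feasible t q) Cs)
  (hcover : forall v : V, has (fun c => v \in c) Cs) :
  exists Ds : seq (seq V),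
    [/\ (size Ds <= size Cs)%N,
        all (length_feasible t q) Ds &
        forall v : V, count (fun c => v \in c) Ds = 1%N].
Proof.
exists (go [::] Cs); split.
- exact: go_size.
- exact: go_feas hq ht_tri _ _ hCs.
- by move=> v; rewrite go_count hcover.
Qed.
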